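(* The map $\alpha\mapsto\mathsf{dark}(\alpha)$ is a bijection from the set of snowy weak compositions to the set $\mathsf{Rook}_+$ of non-attacking rook diagrams. Its inverse sends $R\in\mathsf{Rook}_+$ to the weak composition $\alpha$ with $\alpha_r=0$ if row $r$ of $R$ is empty and $\alpha_r=c$ if $(r,c)\in R$.
   Context: A weak composition is an infinite sequence of nonnegative integers with finitely many positive entries; it is snowy if its positive entries are distinct. A diagram is a finite subset of $\mathbb{Z}_{>0}^2$ ($(r,c)$ in row $r$, row 1 on top, column $c$); it is a non-attacking rook diagram if it has at most one cell in each row and each column. $D(\alpha)=\{(r,c):1\le c\le\alpha_r\}$. For a diagram $D$, $\mathsf{snow}(D)$ is built by iterating through rows from bottom to top: in row $r$ take the rightmost cell $(r,c)\in D$ such that column $c$ contains no dark cloud yet; if it exists label it a dark cloud and add snowflake cells at $(r',c)$ for all $r'<r$ with $(r',c)\notin D$. $\mathsf{dark}(\alpha)$ is the set of dark clouds of $\mathsf{snow}(D(\alpha))$. *)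

(* Defs.v *)
From HB Require Import structures.
From mathcomp Require Import all_boot.
From mathcomp Require Import finmap.
Set Implicit Arguments. Unset Strict Implicit. Unset Printing Implicit Defensive.
Local Open Scope fset_scope.

(* A weak composition alpha = (alpha_1, alpha_2, ...) is represented by the
   finite list s with alpha_r = nth 0 s (r-1) for r >= 1 (alpha_r = 0 beyond
   size s).  To make the representation canonical, s has no trailing zero. *)
Definition weak_comp (s : seq nat) : bool := last 1 s != 0.

Definition wc_entry (s : seq nat) (r : nat) : nat := nth 0 s r.-1.

Definition snowy (s : seq nat) : bool := uniq [seq x <- s | 0 < x].

(* Diagrams: finite sets of cells (r, c), row r (row 1 on top), column c,
   with r, c >= 1. *)
Definition diagram (D : {fset (nat * nat)}) : bool :=
  all (fun p : nat * nat => (0 < p.1) && (0 < p.2)) D.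

Definition rook (D : {fset (nat * nat)}) : bool :=
  diagram D &&
  all (fun p : nat * nat => all (fun q : nat * nat =>
        ((p.1 == q.1) ==> (p == q)) && ((p.2 == q.2) ==> (p == q))) D) D.

Definition Dof (s : seq nat) : {fset (nat * nat)} :=
  [fset p in flatten [seq [seq (r, c) | c <- iota 1 (wc_entry s r)]
                     | r <- iota 1 (size s)]].

(* One step of snow(D), processing row r; the state is
   (dark clouds, snowflake cells). *)
Definition snow_step (D : {fset (nat * nat)}) (r : nat)
    (st : {fset (nat * nat)} * {fset (nat * nat)}) :
    {fset (nat * nat)} * {fset (nat * nat)} :=
  let: (dk, sf) := st in
  let used := [seq p.2 | p <- dk] in
  let cand := [seq p.2 | p <- D & (p.1 == r) && (p.2 \notin used)] in
  if cand is [::] then (dk, sf) else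
  let c := \max_(x <- cand) x in
  ((r, c) |` dk,
   sf `|` [fset p in [seq (r', c) | r' <- iota 1 r.-1 & (r', c) \notin D]]).

(* snow(D): iterate through the rows from bottom (largest row index of D)
   to top (row 1).  foldr over iota 1 N processes N first and 1 last. *)
Definition snow (D : {fset (nat * nat)}) : {fset (nat * nat)} * {fset (nat * nat)} :=
  foldr (snow_step D) (fset0, fset0) (iota 1 (\max_(p <- D) p.1)).

Definition dark_clouds (D : {fset (nat * nat)}) : {fset (nat * nat)} := (snow D).1.

Definition dark (s : seq nat) : {fset (nat * nat)} := dark_clouds (Dof s).

Definition rook_to_comp (R : {fset (nat * nat)}) : seq nat :=
  [seq \max_(p <- R | p.1 == r) p.2 | r <- iota 1 (\max_(p <- R) p.1)].

(* Main.v *)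
Require Import Defs.
From mathcomp Require Import all_boot.
From mathcomp Require Import finmap.
From mathcomp Require Import zify.
Set Implicit Arguments. Unset Strict Implicit.
Local Open Scope fset_scope.

Lemma memDof s p : (p \in Dof s) =
  [&& 0 < p.1, p.1 <= size s, 0 < p.2 & p.2 <= wc_entry s p.1].
Proof.
case: p => r c /=; rewrite /Dof in_fset /=.
apply/flattenP/idP.
- case=> l /mapP [r' Hr' ->] /mapP [c' Hc' [-> ->]].
  move: Hr' Hc'; rewrite !mem_iota => /andP [H1 H2] /andP [H3 H4].
  apply/and4P; split; lia.
- case/and4P=> H1 H2 H3 H4.
  exists [seq (r, c0) | c0 <- iota 1 (wc_entry s r)].
  + apply/mapP; exists r => //; rewrite mem_iota; lia.
  + apply/mapP; exists c => //; rewrite mem_iota; lia.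
Qed.
Lemma nth_pos_size (s : seq nat) i : 0 < nth 0 s i -> i < size s.
Proof. by case: (ltnP i (size s)) => // H; rewrite nth_default. Qed.

Lemma snowy_inj s i j : snowy s -> 0 < nth 0 s i -> nth 0 s i = nth 0 s j -> i = j.
Proof.
elim: s i j => [|x s IH] i j /=; first by rewrite nth_nil.
rewrite /snowy /=.
have memx : forall k, 0 < nth 0 s k -> nth 0 s k \in [seq y <- s | 0 < y].
  by move=> k Hk; rewrite mem_filter Hk mem_nth // nth_pos_size.
case: ifP => Hx.
- rewrite cons_uniq => /andP [Hn Hu].
  case: i j => [|i] [|j] //= Hp Heq.
  + by move: Hn; rewrite Heq memx // -Heq.
  + by move: Hn; rewrite -Heq memx.
  + by rewrite (IH i j).
- move=> Hu; case: i j => [|i] [|j] //= Hp Heq.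
  + by rewrite Hp in Hx.
  + by move: Hp; rewrite Heq => Hp; rewrite Hp in Hx.
  + by rewrite (IH i j).
Qed.

Lemma wc_inj s i j : snowy s -> 0 < i -> 0 < j -> 0 < wc_entry s i ->
  wc_entry s i = wc_entry s j -> i = j.
Proof.
rewrite /wc_entry => Hs Hi Hj Hp Heq.
have := snowy_inj Hs Hp Heq; lia.
Qed.

Lemma fold_dk s m n : snowy s -> 0 < m -> forall p,
  (p \in (foldr (snow_step (Dof s)) (fset0, fset0) (iota m n)).1) =
  [&& m <= p.1, p.1 < m + n, 0 < wc_entry s p.1 & p.2 == wc_entry s p.1].
Proof.
move=> Hs; elim: n m => [|n IH] m Hm p /=.
  by rewrite in_fset0 addn0; case: (leqP m p.1) => //= H; rewrite ltnNge H.
set st := foldr _ _ _.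
have IHp := IH m.+1 (ltn0Sn _); rewrite -/st in IHp.
case: st IHp => dk sf /= IHp.
set cand := [seq _ | _ <- _ & _].
have Hcand : forall c, c \in cand -> 0 < c <= wc_entry s m.
  move=> c /mapP [q]; rewrite mem_filter memDof => /andP [/andP [/eqP Hq1 _]].
  by case/and4P => _ _; rewrite Hq1 => H1 H2 ->; rewrite H1.
have Hamcand : 0 < wc_entry s m -> wc_entry s m \in cand.
  move=> Ham; apply/mapP; exists (m, wc_entry s m) => //.
  rewrite mem_filter memDof /= eqxx Ham Hm leqnn /=.
  have -> : m <= size s by have := nth_pos_size Ham; lia.
  rewrite /= andbT.
  apply/mapP => -[q]; rewrite IHp => /and4P [H1 H2 H3 /eqP H4] H5.
  have E : wc_entry s q.1 = wc_entry s m by rewrite -H4 H5.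
  have := wc_inj Hs (ltn_trans Hm H1) Hm H3 E; move=> Heq; by move: H1; rewrite Heq ltnn.
have Hmax : 0 < wc_entry s m -> \max_(x <- cand) x = wc_entry s m.
  move=> Ham; apply/eqP; rewrite eqn_leq; apply/andP; split.
    by apply/bigmax_leqP_seq => c Hc _; case/andP: (Hcand c Hc).
  by apply: leq_bigmax_seq => //; apply: Hamcand.
case Ham: (0 < wc_entry s m).
- rewrite Hmax //; have Hc := Hamcand Ham.
  case: cand Hc {Hcand Hamcand Hmax} => [|c l] //= _.
  rewrite in_fset1U IHp; case: p => r c' /=; rewrite xpair_eqE /=.
  rewrite addSn addnS (leq_eqVlt m r); case: (eqVneq r m) => [->|Hne] /=.
    by rewrite ltnn Ham /= orbF ltnS leq_addr.
  done.
- case E: cand Hcand => [|c l] Hc /=.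
  + rewrite IHp; case: p => r c' /=.
    rewrite addSn addnS (leq_eqVlt m r); case: (eqVneq r m) => [->|Hne] /=.
      by rewrite ltnn Ham /= andbF.
    done.
  + by have := Hc c; rewrite mem_head => /(_ isT) /andP [H1 H2]; move: Ham; rewrite (leq_trans H1 H2).
Qed.

Lemma dark_mem s p : snowy s -> (p \in dark s) =
  [&& 0 < p.1, 0 < wc_entry s p.1 & p.2 == wc_entry s p.1].
Proof.
move=> Hs; rewrite /dark /dark_clouds /snow fold_dk //.
case: p => r c /=; case Hr: (0 < r) => //=.
case Hw: (0 < wc_entry s r); last by rewrite andbF. rewrite /=.
have Hle : r <= \max_(p <- Dof s) p.1.
  apply: (@leq_bigmax_seq _ _ _ (fun p : nat * nat => p.1) (r,1)) => //.
  rewrite memDof /= Hr Hw andbT /=.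
  by have := nth_pos_size Hw; rewrite prednK.
by rewrite add1n ltnS Hle.
Qed.

Lemma bigmax_exists (T : eqType) (l : seq T) (P : pred T) (F : T -> nat) :
  0 < \max_(x <- l | P x) F x ->
  exists2 x, x \in l & P x && (F x == \max_(x <- l | P x) F x).
Proof.
elim: l => [|y l IH]; first by rewrite big_nil.
rewrite big_cons; case Py: (P y).
- case: (leqP (\max_(x <- l | P x) F x) (F y)) => H.
  + move=> _; exists y; first exact: mem_head.
    by rewrite Py eqxx.
  + move=> H0; have [x Hx Hx2] := IH (leq_ltn_trans (leq0n _) H).
    exists x; first by rewrite in_cons Hx orbT.
    by [].
- move=> H0; have [x Hx Hx2] := IH H0.
  by exists x => //; rewrite in_cons Hx orbT.
Qed.

Lemma rook_dark s : snowy s -> rook (dark s).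
Proof.
move=> Hs; apply/andP; split.
  by apply/allP => p; rewrite dark_mem // => /and3P [H1 H2 /eqP ->]; rewrite H1.
apply/allP => p; rewrite dark_mem // => /and3P [Hp1 Hp2 /eqP Hp3].
apply/allP => q; rewrite dark_mem // => /and3P [Hq1 Hq2 /eqP Hq3].
case: p q Hp1 Hp2 Hp3 Hq1 Hq2 Hq3 => r c [r' c'] /= Hp1 Hp2 Hp3 Hq1 Hq2 Hq3.
apply/andP; split; apply/implyP => /eqP E.
  by move: Hq3; rewrite -E -Hp3 => ->.
have E' : wc_entry s r = wc_entry s r' by rewrite -Hp3 -Hq3.
by rewrite (wc_inj Hs Hp1 Hq1 Hp2 E') E.
Qed.

Lemma left_inv s : weak_comp s -> snowy s -> rook_to_comp (dark s) = s.
Proof.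
move=> Hw Hs; rewrite /rook_to_comp.
have HN : \max_(p <- dark s) p.1 = size s.
  apply/eqP; rewrite eqn_leq; apply/andP; split.
    apply/bigmax_leqP_seq => p; rewrite dark_mem // => /and3P [H1 H2 _] _.
    by have := nth_pos_size H2; rewrite prednK.
  case: s Hw Hs => [//|x s'] Hw Hs.
  apply: (@leq_bigmax_seq _ _ _ (fun p : nat * nat => p.1) (size (x :: s'), last x s')) => //.
  rewrite dark_mem //= /wc_entry /= -[last x s'](nth_last 0 (x :: s')) /= eqxx andbT.
  by move: Hw; rewrite /weak_comp /= -[last x s'](nth_last 0 (x :: s')) /= lt0n.
rewrite HN; transitivity (mkseq (nth 0 s) (size s)); last exact: mkseq_nth.
have -> : iota 1 (size s) = map (addn 1) (iota 0 (size s)) by rewrite -iotaDl.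
rewrite /mkseq -map_comp.
apply/eq_in_map => i _ /=.
apply/eqP; rewrite eqn_leq; apply/andP; split.
  apply/bigmax_leqP_seq => p; rewrite dark_mem // => /and3P [_ _ /eqP ->] /eqP ->.
  by rewrite /wc_entry add1n.
case Hi: (0 < nth 0 s i); last by move: Hi; rewrite lt0n => /negbFE /eqP ->.
have H := @leq_bigmax_seq _ (dark s : seq (nat * nat)) (fun p => p.1 == (1 + i)%N) (fun p => p.2) ((1 + i)%N, nth 0 s i).
apply: H => //=.
  by rewrite dark_mem //= /wc_entry add1n /= Hi eqxx.
Qed.

Section RookInv.
Variable R : {fset (nat * nat)}.
Hypothesis HR : rook R.

Let g r := \max_(p <- R | p.1 == r) p.2.
Let N := \max_(p <- R) p.1.

Lemma rook_diag p : p \in R -> 0 < p.1 /\ 0 < p.2.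
Proof. by case/andP: HR => /allP H _ /H /andP []. Qed.

Lemma rook_row p q : p \in R -> q \in R -> p.1 = q.1 -> p = q.
Proof.
by case/andP: HR => _ /allP H /H /allP Hp /Hp /andP [/implyP H1 _] E; apply/eqP/H1/eqP.
Qed.

Lemma rook_col p q : p \in R -> q \in R -> p.2 = q.2 -> p = q.
Proof.
by case/andP: HR => _ /allP H /H /allP Hp /Hp /andP [_ /implyP H1] E; apply/eqP/H1/eqP.
Qed.

Lemma g_mem p : p \in R -> g p.1 = p.2.
Proof.
move=> Hp; apply/eqP; rewrite eqn_leq; apply/andP; split.
  by apply/bigmax_leqP_seq => q Hq /eqP E; rewrite (rook_row Hq Hp E).
have H := @leq_bigmax_seq _ (R : seq (nat * nat)) (fun q => q.1 == p.1) (fun q => q.2) p.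
exact: H.
Qed.

Lemma g_pos r : 0 < g r -> exists2 p, p \in R & p.1 = r.
Proof.
by case/bigmax_exists => p Hp /andP [/eqP E _]; exists p.
Qed.

Lemma wc_t r : 0 < r -> wc_entry (rook_to_comp R) r = g r.
Proof.
move=> Hr; rewrite /wc_entry /rook_to_comp -/N.
case: (ltnP r.-1 N) => H.
  by rewrite (nth_map 0) ?size_iota // nth_iota // add1n prednK.
rewrite nth_default ?size_map ?size_iota //.
apply/esym/eqP; rewrite -leqn0; apply/bigmax_leqP_seq => p Hp /eqP E.
have H2 := @leq_bigmax_seq _ (R : seq (nat * nat)) xpredT (fun q => q.1) p Hp isT.
rewrite -/N E in H2; move: H H2; rewrite -(prednK Hr) /=; lia.
Qed.

Lemma weak_t : weak_comp (rook_to_comp R).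
Proof.
rewrite /weak_comp /rook_to_comp -/N.
case HN: N => [|n] //.
have [p Hp /andP [_ /eqP Ep]] : exists2 p, p \in R & xpredT p && (p.1 == N).
  by have := @bigmax_exists _ (R : seq (nat * nat)) xpredT (fun q => q.1); rewrite -/N HN => /(_ isT).
have := g_mem Hp; rewrite Ep HN => Hg.
have [_ H2] := rook_diag Hp.
have -> : iota 1 n.+1 = iota 1 n ++ [:: (1 + n)%N] by rewrite -(iotaD 1 n 1) addn1.
rewrite map_cat last_cat /= add1n; move: Hg; rewrite /g => ->; by rewrite -lt0n.
Qed.

Lemma snowy_t : snowy (rook_to_comp R).
Proof.
rewrite /snowy /rook_to_comp filter_map map_inj_in_uniq ?filter_uniq ?iota_uniq //.
move=> r r'; rewrite !mem_filter /= => /andP [Hr _] /andP [Hr' _] E.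
have [p Hp Ep] := g_pos Hr.
have [q Hq Eq] := g_pos Hr'.
have E2 : g r = g r' := E.
rewrite -Ep -Eq (g_mem Hp) (g_mem Hq) in E2.
by rewrite -Ep -Eq (rook_col Hp Hq E2).
Qed.

Lemma dark_t : dark (rook_to_comp R) = R.
Proof.
apply/fsetP => p; rewrite dark_mem; last exact: snowy_t.
case Hp: (p \in R).
  have [H1 H2] := rook_diag Hp.
  by rewrite H1 wc_t // (g_mem Hp) H2 eqxx.
case Ec: [&& _, _ & _] => //; case/and3P: Ec => H1 H2 /eqP H3.
rewrite wc_t // in H2 H3.
have [q Hq Eq] := g_pos H2.
rewrite -Eq (g_mem Hq) in H3.
have : p = q by case: p q H3 Eq {Hp H1 H2 Hq} => a b [c d] /= -> ->.
by move=> E; rewrite E Hq in Hp.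
Qed.
End RookInv.

Theorem lemma4p20 :
  (* dark maps snowy weak compositions into Rook_+ *)
  (forall s : seq nat, weak_comp s -> snowy s -> rook (dark s)) /\
  (* dark is injective on snowy weak compositions *)
  (forall s t : seq nat, weak_comp s -> snowy s -> weak_comp t -> snowy t ->
     dark s = dark t -> s = t) /\
  (* the explicit inverse: for R in Rook_+, rook_to_comp R is a snowy weak
     composition with dark (rook_to_comp R) = R (hence dark is surjective) *)
  (forall R : {fset (nat * nat)}, rook R ->
     weak_comp (rook_to_comp R) /\ snowy (rook_to_comp R) /\
     dark (rook_to_comp R) = R) /\
  (* and rook_to_comp is a left inverse of dark on snowy weak compositions *)
  (forall s : seq nat, weak_comp s -> snowy s -> rook_to_comp (dark s) = s).
Proof.
split; first by move=> s _; exact: rook_dark.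
split.
  by move=> s t Ws Ss Wt St E; rewrite -(left_inv Ws Ss) E left_inv.
split; last exact: left_inv.
move=> R HR; split; first exact: weak_t.
split; [exact: snowy_t | exact: dark_t].
Qed.
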